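(* Let $r \in \mathbb{Z}_{\geqslant 2}$. For any real $x \geqslant 1$, \begin{align*} \sum_{1 \leqslant n_1 < \dotsb < n_r \leqslant x} \mu \left( n_1 \dotsb n_r \right) \left \lfloor \frac{x}{n_1 \dotsb n_r} \right \rfloor &= \frac{1}{r!} \sum_{n_1 ,\dotsc ,n_r \leqslant x} \mu \left( n_1 \dotsb n_r \right) \left \lfloor \frac{x}{n_1 \dotsb n_r} \right \rfloor \\ &\quad - \frac{1}{r!}\sum_{j=2}^{r-2} (-1)^j (j-1) \binom{r}{j} \sum_{n \leqslant x} (1-r+j)^{\omega(n)} - \frac{(-1)^r \lfloor x \rfloor}{r(r-2)!} + \frac{(-1)^{r}(r-2)}{(r-1)!}. \end{align*}
   Context: $\mu$ is the Möbius function, $\lfloor\cdot\rfloor$ the integer part, and $\omega(n)$ the number of distinct prime factors of $n$. The first sum on the right runs over all $r$-tuples of positive integers at most $x$; an empty sum (e.g. over $j$ when $r<4$) is $0$. *)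

(* Defs.v *)
From HB Require Import structures.
From mathcomp Require Import all_boot all_order all_algebra.
From mathcomp Require Import reals.
Set Implicit Arguments. Unset Strict Implicit. Unset Printing Implicit Defensive.
Import Order.TTheory GRing.Theory Num.Theory.

Definition omega (n : nat) : nat := size (primes n).

(* Moebius function (with the convention mu 0 = 0, irrelevant here):
   mu n = (-1)^k if n is a product of k distinct primes, 0 if some p^2 | n. *)
Definition squarefree (n : nat) : bool :=
  (0 < n)%N && all (fun p => logn p n == 1)%N (primes n).

Definition mobius (n : nat) : int :=
  if squarefree n then ((-1) ^+ omega n)%R else 0%R.

(* Main.v *)
Require Import Defs.
From HB Require Import structures.
From mathcomp Require Import all_boot all_order all_algebra.
From mathcomp Require Import reals.
From mathcomp Require Import all_fingroup.
From mathcomp Require Import ring.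
Import Order.TTheory GRing.Theory Num.Theory.

Set Implicit Arguments. Unset Strict Implicit. Unset Printing Implicit Defensive.

Lemma mobius0 : mobius 0 = 0%R.
Proof. by []. Qed.

Lemma mobius1 : mobius 1 = 1%R.
Proof. by rewrite /mobius /squarefree /= /omega /=. Qed.

Lemma mobius_sq p d : prime p -> p * p %| d -> mobius d = 0%R.
Proof.
move=> pp hd; rewrite /mobius /squarefree.
case: (posnP d) => [->|d0] //.
case: ifP => // /andP [_ H]; exfalso; move: H; apply/negP.
have pd : p \in primes d.
  by rewrite mem_primes pp d0 (dvdn_trans (dvdn_mulr p (dvdnn p)) hd).
apply/allPn; exists p => //.
  have : 2 <= logn p d.
    by rewrite -(pfactor_dvdn 2 pp d0) expnS expn1.
  by case: (logn p d) => [|[|]].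
Qed.

Lemma primes_mul_prime p d : prime p -> 0 < d -> ~~ (p %| d) ->
  perm_eq (primes (p * d)) (p :: primes d).
Proof.
move=> pp d0 npd; apply: uniq_perm.
- exact: primes_uniq.
- rewrite /= primes_uniq andbT mem_primes negb_and; apply/orP; right.
  by rewrite negb_and npd orbT.
move=> q; by rewrite in_cons (primesM _ (prime_gt0 pp) d0) primes_prime // in_cons in_nil orbF.
Qed.

Lemma omega_mul_prime p d : prime p -> 0 < d -> ~~ (p %| d) ->
  omega (p * d) = (omega d).+1.
Proof. by move=> pp d0 npd; rewrite /omega (perm_size (primes_mul_prime pp d0 npd)). Qed.

Lemma squarefree_mul_prime p d : prime p -> 0 < d -> ~~ (p %| d) ->
  squarefree (p * d) = squarefree d.
Proof.
move=> pp d0 npd; rewrite /squarefree muln_gt0 prime_gt0 // d0 /=.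
rewrite (perm_all _ (primes_mul_prime pp d0 npd)) /=.
rewrite (lognM _ (prime_gt0 pp) d0) (logn_prime _ pp) eqxx (logn_coprime (m:=d)) ?add1n ?eqxx /=; last first.
  by rewrite prime_coprime.
apply: eq_in_all => q; rewrite mem_primes => /and3P [qp _ qd].
rewrite (lognM _ (prime_gt0 pp) d0) (logn_prime _ pp).
have -> : (q == p) = false by apply/negbTE; apply: contraNneq npd => <-.
by [].
Qed.

Lemma mobius_mul_prime p d : prime p -> 0 < d -> ~~ (p %| d) ->
  mobius (p * d) = (- mobius d)%R.
Proof.
move=> pp d0 npd; rewrite /mobius squarefree_mul_prime // omega_mul_prime //.
by case: ifP => _; rewrite ?oppr0 // exprS mulN1r.
Qed.

Section BinomPart.
Local Open Scope ring_scope.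

Lemma binom_alt (t : nat) :
  \sum_(j < t.+1) ((-1) ^+ j *+ 'C(t, j)) = (t == 0%N)%:R :> int.
Proof.
rewrite -expr0n -(subrr (1 : int)) exprDn; apply: eq_bigr => j _.
by rewrite expr1n mul1r.
Qed.

Lemma binom_alt_j (t : nat) :
  \sum_(j < t.+1) ((-1) ^+ j * j%:R *+ 'C(t, j)) = - (t == 1%N)%:R :> int.
Proof.
case: t => [|t]; first by rewrite big_ord_recl big_ord0 /= mulr0 mul0rn addr0 oppr0.
rewrite big_ord_recl /= mulr0 mul0rn add0r.
have -> : \sum_(i < t.+1) ((-1) ^+ (bump 0 i) * (bump 0 i)%:R *+ 'C(t.+1, bump 0 i))
  = \sum_(i < t.+1) (- ((-1) ^+ i *+ 'C(t, i)) *+ t.+1) :> int.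
  apply: eq_bigr => i _; rewrite /bump /= add1n.
  rewrite -mulr_natr -mulrA -natrM -mul_bin_diag /= natrM exprS.
  rewrite -mulNrn -mulr_natr -[_ *+ t.+1]mulr_natr.
  ring.
rewrite sumrMnl sumrN binom_alt.
by case: t => [|t] //=; rewrite ?mulr1n // mul0rn oppr0.
Qed.

Definition cc (j : nat) : int := if (2 <= j)%N then (-1) ^+ j * (j%:R - 1) else 0.

Lemma binom_cc t : \sum_(j < t.+1) cc j *+ 'C(t, j) = (2 <= t)%N%:R :> int.
Proof.
have pw : forall j : nat, cc j = (-1) ^+ j * j%:R - (-1) ^+ j + (j == 0%N)%:R.
  by case=> [|[|j]]; rewrite /cc /=; ring.
rewrite (eq_bigr (fun j : 'I_t.+1 => ((-1) ^+ j * j%:R *+ 'C(t, j) - (-1) ^+ j *+ 'C(t, j))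
   + (j == 0%N :> nat)%:R *+ 'C(t, j))); last by move=> j _; rewrite pw mulrnDl mulrnBl.
rewrite big_split /= sumrB binom_alt_j binom_alt.
rewrite big_ord_recl /= bin0 big1 ?addr0; last by move=> j _; rewrite /bump /= mul0rn.
by case: t => [|[|t]].
Qed.

Lemma sum_subsets (T : finType) (A : {set T}) (g : nat -> int) :
  \sum_(S : {set T} | S \subset A) g #|S| = \sum_(j < #|A|.+1) g j *+ 'C(#|A|, j).
Proof.
rewrite (partition_big (fun S : {set T} => (inord #|S| : 'I_#|A|.+1)) xpredT) //=.
apply: eq_bigr => j _.
rewrite (eq_bigl (fun S : {set T} => S \in [set S : {set T} | S \subset A & #|S| == j])); last first.
  move=> S; rewrite inE; case: (boolP (S \subset A)) => //= sA.
  have hS : (#|S| < #|A|.+1)%N by rewrite ltnS subset_leq_card.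
  apply/eqP/eqP => [<-|hj]; first by rewrite inordK.
  by apply: val_inj; rewrite /= inordK.
rewrite (eq_bigr (fun _ => g j)); last by move=> S; rewrite inE => /andP [_ /eqP ->].
by rewrite sumr_const cards_draws.
Qed.

Lemma sum_subsets_nat (T : finType) (A : {set T}) (g : nat -> int) :
  \sum_(S : {set T} | S \subset A) g #|S| = \sum_(0 <= j < #|A|.+1) g j *+ 'C(#|A|, j).
Proof. by rewrite sum_subsets big_mkord. Qed.

End BinomPart.

Lemma count_dvd_prod (I : Type) (s : seq I) (F : I -> nat) p : prime p ->
  ~~ (p * p %| \prod_(i <- s) F i) ->
  \sum_(i <- s) (p %| F i) = (p %| \prod_(i <- s) F i).
Proof.
move=> pp; elim: s => [|a s IH]; first by move=> _; rewrite !big_nil Euclid_dvd1.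
rewrite !big_cons => h.
have h2 : ~~ (p * p %| \prod_(i <- s) F i).
  by apply: contra h => /(dvdn_mul (dvdnn (F a))) hh; apply: dvdn_trans hh; rewrite dvdn_mull.
rewrite IH // Euclid_dvdM //.
case: (boolP (p %| F a)) => ha; case: (boolP (p %| \prod_(i <- s) F i)) => hb //=.
by exfalso; move: h; rewrite (dvdn_mul ha hb).
Qed.

Section Core.
Variables (r N : nat).
Local Notation T := {ffun 'I_r -> 'I_N.+1}.

Definition prodf (f : T) := \prod_(i < r) (f i : nat).
Definition X (n : nat) (f : T) : int := if prodf f %| n then mobius (prodf f) else 0%R.
Definition ones (S : {set 'I_r}) (f : T) := [forall j in S, (f j : nat) == 1].
Definition E (S : {set 'I_r}) n := (\sum_(f : T | ones S f) X n f)%R.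

Definition upd (f : T) i (v : 'I_N.+1) : T := [ffun j => if j == i then v else f j].

Lemma prodf_upd f i v : prodf (upd f i v) = v * \prod_(j < r | j != i) (f j : nat).
Proof.
rewrite /prodf (bigD1 i) //= ffunE eqxx; congr (_ * _).
by apply: eq_bigr => j /negbTE ji; rewrite ffunE ji.
Qed.

Lemma prodf_D1 f i : prodf f = f i * \prod_(j < r | j != i) (f j : nat).
Proof. by rewrite /prodf (bigD1 i). Qed.

Lemma X_sq n f p : prime p -> p * p %| prodf f -> X n f = 0%R.
Proof. by move=> pp hp; rewrite /X (mobius_sq pp hp); case: ifP. Qed.


Lemma ones_upd (S : {set 'I_r}) (g : T) (i : 'I_r) v : i \notin S -> ones S (upd g i v) = ones S g.
Proof.
move=> iS; apply: eq_forallb => j; rewrite ffunE.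
case: (boolP (j \in S)) => jS //=.
by have -> : (j == i) = false by apply/negbTE; apply: contraNneq iS => <-.
Qed.

Lemma X_zero_prod n (f : T) : 0 < n -> prodf f = 0 -> X n f = 0%R.
Proof. by move=> n0 h; rewrite /X h dvd0n; case: ifP. Qed.

Lemma X_le n (f : T) : 0 < n -> X n f != 0%R -> prodf f <= n.
Proof.
rewrite /X => n0; case: ifP => [h _|]; last by rewrite eqxx.
exact: dvdn_leq.
Qed.

Lemma upd_same (g : T) i v : upd (upd g i v) i (g i) = g.
Proof. by apply/ffunP => j; rewrite !ffunE; case: eqP => // ->. Qed.

Lemma prodf_upd_mul (g : T) i (v : 'I_N.+1) p : (v : nat) = p * g i ->
  prodf (upd g i v) = p * prodf g.
Proof. by move=> hv; rewrite prodf_upd (prodf_D1 g i) hv mulnA. Qed.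

Lemma E_i_sum (S : {set 'I_r}) n m p (i : 'I_r) : prime p -> i \notin S -> 0 < n -> 0 < m -> p * m <= N ->
  (forall d, ~~ (p %| d) -> (p * d %| n) = (d %| m)) -> ~~ (p %| m) ->
  (\sum_(f : T | ones S f && (p %| f i)%N) X n f =
    - \sum_(g : T | ones S g) X m g)%R.
Proof.
move=> pp iS n0 m0 pmN Hd npm.
rewrite (reindex_onto (fun g => upd g i (inord (p * g i)%N))
                      (fun f => upd f i (inord (f i %/ p)%N))); last first.
  move=> f /andP [_ hf]; apply/ffunP => j; rewrite !ffunE.
  case: eqP => [->|//]; rewrite eqxx.
  have hq : f i %/ p < N.+1 by apply: leq_ltn_trans (ltn_ord (f i)); apply: leq_div.
  apply: val_inj; rewrite /= (inordK hq) mulnC divnK // inordK //.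
rewrite -sumrN big_mkcond [RHS]big_mkcond /=; apply: eq_bigr => g _.
rewrite ones_upd // ffunE eqxx.
have Xm0 : ~~ (p * g i <= N) -> X m g = 0%R.
  move=> hN; rewrite /X; case: ifP => // hd.
  have pg0 : 0 < prodf g by apply: dvdn_gt0 hd.
  have : g i <= prodf g.
    by apply: dvdn_leq => //; rewrite (prodf_D1 g i) dvdn_mulr.
  move=> h1; have h2 := dvdn_leq m0 hd.
  move: hN; rewrite -ltnNge => hN.
  have := leq_trans (leq_mul (leqnn p) (leq_trans h1 h2)) pmN.
  by rewrite leqNgt hN.
case: (leqP (p * g i) N) => hN; last first.
  rewrite Xm0 -?ltnNge // oppr0 if_same.
  rewrite X_zero_prod ?if_same //.
  rewrite prodf_upd /= val_insubd.
  by have -> : (p * g i < N.+1) = false by rewrite ltnS leqNgt hN.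
have hv : ((inord (p * g i) : 'I_N.+1) : nat) = p * g i by rewrite inordK.
rewrite hv dvdn_mulr // andbT mulKn ?prime_gt0 // inord_val upd_same eqxx andbT.
case: ifP => // _; rewrite /X (prodf_upd_mul hv).
case: (boolP (p %| prodf g)) => hpg.
  rewrite (mobius_sq pp (dvdn_mul (dvdnn p) hpg)) if_same.
  have -> : (prodf g %| m) = false.
    by apply/negbTE; apply: contra npm => h; apply: dvdn_trans h.
  by rewrite oppr0.
have pg0 : 0 < prodf g by case: (prodf g) hpg => //; rewrite dvdn0.
rewrite Hd // mobius_mul_prime //.
by case: ifP; rewrite ?oppr0.
Qed.


Lemma sum_if_dvd n (f : T) p : prime p ->
  (\sum_(i < r) (if (p %| f i)%N then X n f else 0%R))%R =
  if (p %| prodf f)%N then X n f else 0%R.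
Proof.
move=> pp.
have -> : (\sum_(i < r) (if (p %| f i)%N then X n f else 0%R))%R =
          (X n f *+ \sum_(i < r) (p %| f i)%N)%R.
  by rewrite -sumrMnr; apply: eq_bigr => i _; rewrite mulrb.
case: (X n f =P 0%R) => [->|hX]; first by rewrite mul0rn if_same.
have hsq : ~~ (p * p %| prodf f).
  by apply/negP => h; apply: hX; apply: (X_sq n pp h).
rewrite /prodf in hsq *; rewrite (count_dvd_prod pp hsq).
by case: ifP.
Qed.

Lemma E_step (S : {set 'I_r}) n m p : prime p -> 0 < n -> 0 < m -> p * m <= N ->
  (forall d, ~~ (p %| d) -> (p * d %| n) = (d %| m)) ->
  (forall d, ~~ (p %| d) -> (d %| n) = (d %| m)) -> ~~ (p %| m) ->
  E S n = ((1 - (r - #|S|)%:Z) * E S m)%R.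
Proof.
move=> pp n0 m0 pmN Hd Hd2 npm.
have split1 : forall f, X n f = (X m f + \sum_(i < r) (if (p %| f i)%N then X n f else 0%R))%R.
  move=> f; rewrite sum_if_dvd //; case: ifP => hp.
    rewrite /X; have -> : (prodf f %| m) = false.
      by apply/negbTE; apply: contra npm => h; apply: dvdn_trans h.
    by rewrite add0r.
  by rewrite addr0 /X Hd2 // hp.
rewrite /E (eq_bigr _ (fun f _ => split1 f)) big_split /=.
rewrite exchange_big /=.
have hi : forall i : 'I_r, (\sum_(f : T | ones S f) (if (p %| f i)%N then X n f else 0%R))%R =
    if i \in S then 0%R else (- \sum_(g : T | ones S g) X m g)%R.
  move=> i; rewrite -big_mkcondr /=.
  case: ifP => iS; last by apply: E_i_sum => //; rewrite iS.
  apply: big_pred0 => f; apply/negP => /andP [/forallP /(_ i)].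
  by rewrite iS /= => /eqP ->; rewrite Euclid_dvd1.
set e := (\sum_(g : T | ones S g) X m g)%R.
rewrite (eq_bigr (fun i => if i \notin S then (- e)%R else 0%R)); last first.
  by move=> i _; rewrite hi; case: (i \in S).
rewrite -big_mkcond /= sumr_const.
have -> : #|[pred i : 'I_r | i \notin S]| = r - #|S|.
  have hc : #|S| + #|~: S| = r by rewrite cardsC card_ord.
  have := f_equal (subn^~ #|S|) hc; rewrite /= addKn => <-.
  by apply: eq_card => i; rewrite !inE.
by rewrite mulrBl mul1r mulNrn -mulr_natl natz.
Qed.


Lemma E_one (S : {set 'I_r}) : 0 < N -> E S 1 = 1%R.
Proof.
move=> N0.
pose one : T := [ffun _ => inord 1].
have v1 : forall j, (one j : nat) = 1 by move=> j; rewrite ffunE inordK.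
have p1 : prodf one = 1 by rewrite /prodf big1 // => j _; rewrite v1.
rewrite /E (bigD1 one) /=; last by apply/forallP => j; apply/implyP => _; rewrite v1.
rewrite big1 ?addr0; first by rewrite /X p1 dvdnn mobius1.
move=> f /andP [_ hf]; rewrite /X; case: ifP => // hd.
exfalso; move/negP: hf; apply; apply/eqP/ffunP => j; apply: val_inj.
rewrite [\val (one j)]v1; move: hd; rewrite dvdn1 (prodf_D1 f j) muln_eq1.
by case/andP => /eqP.
Qed.

Lemma omega_step n m p : prime p -> ~~ (p %| m) -> 0 < m ->
  (forall q, (q \in primes n) = (q == p) || (q \in primes m)) ->
  omega n = (omega m).+1.
Proof.
move=> pp npm m0 hq; rewrite /omega.
have -> : size (primes n) = size (p :: primes m); last by [].
apply: perm_size; apply: uniq_perm; first exact: primes_uniq.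
  rewrite /= primes_uniq andbT mem_primes negb_and; apply/orP; right.
  by rewrite negb_and npm orbT.
by move=> q; rewrite hq in_cons.
Qed.

Lemma E_val (S : {set 'I_r}) n : 0 < n <= N ->
  E S n = ((1 - (r - #|S|)%:Z) ^+ omega n)%R.
Proof.
elim: n {-2}n (leqnn n) => [|k IH] n hn /andP [n0 nN].
  by move: n0; rewrite lt0n -leqn0 hn.
case: (ltnP 1 n) => n1; last first.
  have -> : n = 1 by apply/eqP; rewrite eqn_leq n1 n0.
  by rewrite E_one ?(leq_trans n0 nN) // /omega /= expr0.
set p := pdiv n; have pp : prime p by apply: pdiv_prime.
have pn : p %| n by apply: pdiv_dvd.
set m := n`_p^'.
have m0 : 0 < m by apply: part_gt0.
have npm : ~~ (p %| m).
  by rewrite -p'natE // part_pnat.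
have nE : n = n`_p * m by rewrite partnC.
have pnp : p %| n`_p.
  by rewrite p_part; apply: dvdn_exp => //; rewrite logn_gt0 mem_primes pp n0 pn.
have hpm : p * m %| n by rewrite [X in _ %| X]nE dvdn_mul.
have pmn : p * m <= n by apply: dvdn_leq.
have mn : m < n.
  by apply: leq_trans pmn; rewrite ltn_Pmull // prime_gt1.
have Hd2 : forall d, ~~ (p %| d) -> (d %| n) = (d %| m).
  move=> d npd; apply/idP/idP => hd; last by apply: dvdn_trans hd (dvdn_part _ _).
  have d0 : 0 < d by apply: dvdn_gt0 hd.
  rewrite -(part_pnat_id (pi := p^') (n := d)); first exact: partn_dvd.
  by rewrite p'natE.
have Hd : forall d, ~~ (p %| d) -> (p * d %| n) = (d %| m).
  move=> d npd; apply/idP/idP => hd; last by apply: dvdn_trans hpm; apply: dvdn_mul.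
  by rewrite -Hd2 //; apply: dvdn_trans hd; apply: dvdn_mull.
rewrite (E_step S pp n0 m0 (leq_trans pmn nN) Hd Hd2 npm).
rewrite IH; last first.
  by rewrite m0 (leq_trans (ltnW mn) nN).
  by rewrite -ltnS (leq_trans mn).
rewrite (omega_step (n := n) pp npm m0) ?exprS //.
move=> q; apply/idP/idP.
  rewrite mem_primes => /and3P [qp _ qn].
  case: (q =P p) => //= qp'; rewrite mem_primes qp m0 /= -Hd2 //.
  by rewrite dvdn_prime2 // eq_sym; apply/eqP.
case/orP => [/eqP ->|]; first by rewrite mem_primes pp n0.
by rewrite !mem_primes => /and3P [-> _ qm] /=; rewrite n0 (dvdn_trans qm) // dvdn_part.
Qed.

Definition O (f : T) := [set j | (f j : nat) == 1].

Lemma ones_sub S f : ones S f = (S \subset O f).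
Proof.
apply/forallP/subsetP => [h j jS|h j]; first by rewrite inE; move/implyP: (h j); apply.
by apply/implyP => /h; rewrite inE.
Qed.

Lemma prodf_pair (f : T) i j : i != j -> (f i * f j %| prodf f)%N.
Proof.
move=> ij; rewrite (prodf_D1 f i); apply: dvdn_mul => //.
by rewrite (bigD1 j) 1?eq_sym //= dvdn_mulr.
Qed.

Lemma noninj_pw n (f : T) : 0 < n ->
  (if ~~ injectiveb f then X n f else 0%R) = (if 1 < #|O f| then X n f else 0%R).
Proof.
move=> n0; case: (X n f =P 0%R) => [->|hX]; first by rewrite !if_same.
have hd : prodf f %| n by move: hX; rewrite /X; case: ifP.
have p0 : 0 < prodf f by apply: dvdn_gt0 hd.
have hsq : forall p, prime p -> ~~ (p * p %| prodf f).
  by move=> p pp; apply/negP => h; apply: hX; apply: X_sq pp h.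
congr (if _ then _ else _); apply/idP/idP.
  case/injectivePn => i [j ij eqij].
  have fi1 : (f i : nat) = 1.
    have fi0 : 0 < f i.
      by apply: dvdn_gt0 p0 _; rewrite (prodf_D1 f i) dvdn_mulr.
    case: (ltngtP (f i) 1) => // [|gt]; first by rewrite ltnNge fi0.
    have pp := pdiv_prime gt; have pd := pdiv_dvd (f i).
    exfalso; move: (hsq _ pp); apply/negP.
    rewrite negbK; apply: (@dvdn_trans (f i * f j) _ _ _ (prodf_pair f ij)); rewrite -eqij; exact: dvdn_mul.
  apply/card_gt1P; exists i, j; by rewrite !inE -eqij fi1 ij.
case/card_gt1P => i [j [hi hj ij]]; apply/injectivePn; exists i; exists j => //.
apply: val_inj; move: hi hj; rewrite !inE => /eqP h1 /eqP h2; by rewrite /= h1 h2.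
Qed.

Lemma noninj_sum n : 0 < n <= N ->
  (\sum_(f : T | ~~ injectiveb f) X n f)%R =
  (\sum_(0 <= j < r.+1) cc j * (1 - (r - j)%:Z) ^+ omega n *+ 'C(r, j))%R.
Proof.
move=> hn; have n0 : 0 < n by case/andP: hn.
rewrite big_mkcond /=.
rewrite (eq_bigr (fun f => \sum_(S : {set 'I_r}) (if S \subset O f then X n f * cc #|S| else 0%R))%R); last first.
  move=> f _; rewrite noninj_pw // -big_mkcond /= -mulr_sumr sum_subsets binom_cc.
  by case: ifP => _; rewrite ?mulr1 ?mulr0.
rewrite exchange_big /=.
rewrite (eq_bigr (fun S : {set 'I_r} => cc #|S| * E S n)%R); last first.
  move=> S _; rewrite /E -big_mkcond /= -mulr_suml mulrC; congr (_ * _)%R.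
  by apply: eq_bigl => f; rewrite ones_sub.
rewrite (eq_bigr (fun S : {set 'I_r} => cc #|S| * (1 - (r - #|S|)%:Z) ^+ omega n)%R); last first.
  by move=> S _; rewrite E_val.
rewrite (eq_bigl (fun S : {set 'I_r} => S \subset [set: 'I_r])); last by move=> S; rewrite subsetT.
by rewrite (sum_subsets_nat _ (fun k => cc k * (1 - (r - k)%:Z) ^+ omega n)%R) cardsT card_ord.
Qed.

End Core.

Section Sym.
Variables (r N : nat).
Local Notation T := {ffun 'I_r -> 'I_N.+1}.

Definition incr (f : T) := [forall i : 'I_r, forall j : 'I_r, (i < j)%N ==> (f i < f j)%N].
Definition tup (f : T) : r.-tuple 'I_N.+1 := [tuple f i | i < r].
Definition leo (a b : 'I_N.+1) := (a <= b)%N.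

Lemma leo_trans : transitive leo.
Proof. by move=> a b c; apply: leq_trans. Qed.
Lemma leo_total : total leo.
Proof. by move=> a b; apply: leq_total. Qed.
Lemma leo_anti : antisymmetric leo.
Proof. by move=> a b h; apply: val_inj; apply/eqP; rewrite eqn_leq. Qed.

Lemma nth_tup (f : T) (i : 'I_r) : nth ord0 (tup f) i = f i.
Proof. by rewrite -tnth_nth tnth_mktuple. Qed.

Lemma tup_inj : injective tup.
Proof.
move=> f g h; apply/ffunP => i.
by rewrite -(tnth_mktuple f i) -(tnth_mktuple g i) -/(tup f) -/(tup g) h.
Qed.

Lemma incr_inj (g : T) : incr g -> injective g.
Proof.
move=> /forallP hg i j eij; apply: val_inj; case: (ltngtP i j) => // h.
  by have := implyP (forallP (hg i) j) h; rewrite eij ltnn.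
by have := implyP (forallP (hg j) i) h; rewrite eij ltnn.
Qed.

Lemma incr_sorted (g : T) : incr g -> sorted leo (tup g).
Proof.
move=> /forallP hg; rewrite (sorted_pairwise leo_trans).
apply/(pairwiseP ord0) => i j; rewrite !inE size_tuple => ir jr ij.
have := implyP (forallP (hg (Ordinal ir)) (Ordinal jr)) ij.
by rewrite -!(nth_tup g) /= /leo => /ltnW.
Qed.

Lemma sorted_incr (g : T) : sorted leo (tup g) -> uniq (tup g) -> incr g.
Proof.
rewrite (sorted_pairwise leo_trans) => /(pairwiseP ord0) hs hu.
apply/forallP => i; apply/forallP => j; apply/implyP => ij.
have := hs i j; rewrite !inE size_tuple => /(_ (ltn_ord i) (ltn_ord j) ij).
rewrite !nth_tup /leo leq_eqVlt => /orP [|//].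
rewrite -!(nth_tup g) (inj_eq val_inj) nth_uniq ?size_tuple //.
by move/eqP => h; move: ij; rewrite h ltnn.
Qed.

Lemma uniq_tup (f : T) : injective f -> uniq (tup f).
Proof. by move=> fi; rewrite /tup /= map_inj_uniq // enum_uniq. Qed.

Lemma sym_sum (V : zmodType) (W : T -> V) :
  (forall (f : T) (s : {perm 'I_r}), W [ffun i => f (s i)] = W f) ->
  (\sum_(f : T | injectiveb f) W f = (\sum_(g : T | incr g) W g) *+ r`!)%R.
Proof.
move=> hW.
have ex : forall f : T, injectiveb f -> exists g, incr g && perm_eq (tup f) (tup g).
  move=> f /injectiveP fi.
  pose st := sort_tuple leo (tup f).
  pose g : T := [ffun i => tnth st i].
  have tg : tup g = st by apply: eq_from_tnth => i; rewrite tnth_mktuple ffunE.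
  exists g; apply/andP; split.
    apply: sorted_incr; rewrite tg /=; first exact: (sort_sorted leo_total).
    by rewrite sort_uniq uniq_tup.
  by rewrite tg /= perm_sym perm_sort.
have uq : forall f g1 g2, incr g1 -> incr g2 -> perm_eq (tup f) (tup g1) ->
    perm_eq (tup f) (tup g2) -> g1 = g2.
  move=> f g1 g2 h1 h2 p1 p2; apply: tup_inj; apply: val_inj.
  apply: (sorted_eq leo_trans leo_anti); try exact: incr_sorted.
  by apply: perm_trans p2; rewrite perm_sym.
rewrite (eq_bigr (fun f => \sum_(g : T | incr g && perm_eq (tup f) (tup g)) W f)%R); last first.
  move=> f hf; have [g0 hg0] := ex f hf.
  rewrite (big_pred1 g0) // => g /=; apply/idP/eqP => [hg|->//].
  by case/andP: hg => ig pg; case/andP: hg0 => ig0 pg0; apply: uq pg pg0.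
rewrite (exchange_big_dep incr) /=; last by move=> f g _ /andP [].
rewrite -sumrMnl; apply: eq_bigr => g hg.
rewrite (eq_bigl (fun f => f \in [set [ffun i => g (s i)] | s : {perm 'I_r}])); last first.
  move=> f; apply/idP/imsetP.
    case/and3P => _ _ /(@tuple_permP _ r (tup f) (tup g)) [s hs]; exists s => //.
    have hs' : tup f = [tuple tnth (tup g) (s i) | i < r] by apply: val_inj.
    apply/ffunP => i; rewrite ffunE -(tnth_mktuple f i) -/(tup f) hs' !tnth_mktuple //.
  case=> s _ ->; rewrite hg /=; apply/andP; split.
    apply/injectiveP => i j; rewrite !ffunE => /(incr_inj hg); exact: perm_inj.
  apply/(@tuple_permP _ r _ (tup g)); exists s.
  have e : tup [ffun i0 => g (s i0)] = [tuple tnth (tup g) (s i) | i < r].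
    by apply: eq_from_tnth => i; rewrite !tnth_mktuple ffunE.
  exact: (congr1 val e).
rewrite big_imset /=; last first.
  move=> s1 s2 _ _ /ffunP e; apply/permP => i; apply: (incr_inj hg).
  by have := e i; rewrite !ffunE.
rewrite (eq_bigr (fun _ => W g)); last by move=> s _; exact: hW.
by rewrite sumr_const card_Sn.
Qed.

End Sym.

Unset Implicit Arguments.
Local Open Scope ring_scope.

Lemma natz_intr (R : ringType) (n : nat) : (n%:~R : R) = n%:R.
Proof. by []. Qed.

Lemma floor_div (R : realType) (x : R) (m : nat) : 0 <= x -> (0 < m)%N ->
  Num.floor (x / m%:R) = (Num.truncn x %/ m)%:Z.
Proof.
move=> x0 m0; apply: floor_def.
have mR : (0 : R) < m%:R by rewrite ltr0n.
rewrite intrD natz_intr ler_pdivlMr // ltr_pdivrMr // -natrM.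
apply/andP; split.
  apply: le_trans (_ : (Num.truncn x)%:R <= x); last by rewrite truncn_le.
  by rewrite ler_nat leq_trunc_div.
apply: lt_le_trans (truncnS_gt x) _.
have -> : 1%:~R = 1 :> R by [].
by rewrite -(natrD _ _ 1) addn1 -natrM ler_nat ltn_ceil.
Qed.

Lemma div_count (N m : nat) : (0 < m)%N ->
  (N %/ m)%N = (\sum_(1 <= n < N.+1) (m %| n))%N.
Proof.
move=> m0; elim: N => [|N IH]; first by rewrite div0n big_geq.
by rewrite big_nat_recr //= divnS // IH addnC.
Qed.

Lemma omega_eq0 n : (0 < n)%N -> (omega n == 0%N) = (n == 1%N).
Proof.
move=> n0; rewrite /omega size_eq0 primes_eq0.
by case: n n0 => [|[|]].
Qed.

Lemma sum_last (R : zmodType) (F : nat -> R) k : (0 < k)%N ->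
  \sum_(0 <= j < k) F j = \sum_(0 <= j < k.-1) F j + F k.-1.
Proof. by case: k => // k _; rewrite big_nat_recr. Qed.

Lemma sum_from2 (R : zmodType) (F : nat -> R) k : F 0%N = 0 -> F 1%N = 0 ->
  \sum_(0 <= j < k) F j = \sum_(2 <= j < k) F j.
Proof.
move=> F0 F1; case: k => [|[|k]]; first by rewrite !big_geq.
  by rewrite big_nat1 big_geq.
by rewrite big_ltn // big_ltn // F0 F1 !add0r.
Qed.

Lemma cc_pred (R : ringType) k : ((cc k.+1)%:~R : R) = (-1) ^+ k.+1 * k%:R.
Proof.
case: k => [|k]; first by rewrite /cc /= mulr0.
rewrite /cc /= rmorphM /= rmorphXn /= rmorphN1 rmorphB /= rmorph_nat rmorph1.
by rewrite mulrSr addrK.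
Qed.

Lemma cc_top (R : ringType) k : ((cc k.+2)%:~R : R) = (-1) ^+ k.+2 * k.+1%:R.
Proof.
rewrite /cc /= rmorphM /= rmorphXn /= rmorphN1 rmorphB /= rmorph_nat rmorph1.
by rewrite mulrSr addrK.
Qed.

Theorem lemma3p6 (R : realType) (r : nat) (x : R) :
  (2 <= r)%N -> 1 <= x ->
  let N := Num.truncn x in
  let term := fun m : nat =>
    (mobius m)%:~R * (Num.floor (x / m%:R))%:~R : R in
  \sum_(f : {ffun 'I_r -> 'I_N.+1} |
          [forall i, 0 < (f i : nat)]%N &&
          [forall i : 'I_r, forall j : 'I_r, (i < j)%N ==> (f i < f j)%N])
      term (\prod_(i < r) (f i : nat))%N
  = (r`!%:R)^-1 *
      \sum_(f : {ffun 'I_r -> 'I_N.+1} | [forall i, 0 < (f i : nat)]%N)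
        term (\prod_(i < r) (f i : nat))%N
    - (r`!%:R)^-1 *
      \sum_(2 <= j < r.-1)
        (-1) ^+ j * (j.-1)%:R * 'C(r, j)%:R *
        \sum_(1 <= n < N.+1) (1 - r%:R + j%:R) ^+ omega n
    - (-1) ^+ r * (Num.floor x)%:~R / (r%:R * (r - 2)`!%:R)
    + (-1) ^+ r * (r%:R - 2) / (r.-1)`!%:R.
Proof.
move=> r2 x1 N term.
have x0 : 0 <= x by apply: le_trans x1.
have N0 : (0 < N)%N by rewrite truncn_gt0.
have flx : Num.floor x = N%:Z.
  apply: floor_def; rewrite natz_intr intrD natz_intr.
  by have := truncn_itv x0; rewrite -natr1.
have termE : forall m : nat, term m =
    (\sum_(1 <= n < N.+1) (if (m %| n)%N then mobius m else 0))%:~R.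
  move=> m; rewrite /term; case: (posnP m) => [->|m0].
    rewrite mobius0 mul0r big1_seq ?rmorph0 // => n; rewrite mem_index_iota.
    by case/andP => n1 _; rewrite dvd0n; case: (n =P 0%N) => // e; move: n1; rewrite e.
  rewrite floor_div // div_count // -intrM; congr (_%:~R).
  rewrite -natz mulr_natr -sumrMnr; apply: eq_bigr => n _; by rewrite mulrb.
pose W := fun f : {ffun 'I_r -> 'I_N.+1} => term (prodf f).
have t0 : forall f : {ffun 'I_r -> 'I_N.+1}, ~~ [forall i, 0 < (f i : nat)]%N -> W f = 0.
  move=> f /forallPn [i]; rewrite -leqNgt leqn0 => /eqP fi0; rewrite /W.
  have -> : prodf f = 0%N by rewrite (prodf_D1 f i) fi0.
  by rewrite /term mobius0 mul0r.
have LE : \sum_(f : {ffun 'I_r -> 'I_N.+1} |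
          [forall i, 0 < (f i : nat)]%N &&
          [forall i : 'I_r, forall j : 'I_r, (i < j)%N ==> (f i < f j)%N])
      term (\prod_(i < r) (f i : nat))%N = \sum_(f | incr f) W f.
  rewrite big_mkcond [RHS]big_mkcond; apply: eq_bigr => f _.
  case: (boolP [forall i, 0 < (f i : nat)]%N) => hp //=.
  by rewrite t0 //; case: ifP.
have AE : \sum_(f : {ffun 'I_r -> 'I_N.+1} | [forall i, 0 < (f i : nat)]%N)
        term (\prod_(i < r) (f i : nat))%N = \sum_f W f.
  rewrite big_mkcond; apply: eq_bigr => f _.
  case: (boolP [forall i, 0 < (f i : nat)]%N) => hp //=.
  by rewrite t0.
rewrite LE AE; clear LE AE.
have hsym : \sum_(f : {ffun 'I_r -> 'I_N.+1} | injectiveb f) W f = (\sum_(g | incr g) W g) *+ r`!.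
  apply: sym_sum => f s; rewrite /W; congr (term _).
  rewrite /prodf; under eq_bigr => i _ do rewrite ffunE.
  by rewrite [RHS](reindex_inj (@perm_inj _ s)).
have hnon : \sum_(f : {ffun 'I_r -> 'I_N.+1} | ~~ injectiveb f) W f =
   \sum_(1 <= n < N.+1) (\sum_(0 <= j < r.+1) cc j * (1 - (r - j)%:Z) ^+ omega n *+ 'C(r, j))%:~R.
  rewrite (eq_bigr (fun f => \sum_(1 <= n < N.+1) (X n f)%:~R)); last first.
    by move=> f _; rewrite /W termE rmorph_sum.
  rewrite exchange_big /=; apply: eq_big_nat => n hn.
  by rewrite -rmorph_sum noninj_sum.
have hA : \sum_f W f = (\sum_(g | incr g) W g) *+ r`! +
   \sum_(1 <= n < N.+1) (\sum_(0 <= j < r.+1) cc j * (1 - (r - j)%:Z) ^+ omega n *+ 'C(r, j))%:~R.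
  by rewrite (bigID (fun f : {ffun 'I_r -> 'I_N.+1} => injectiveb f)) /= hsym hnon.
rewrite hA flx; clear hA hsym hnon.
move: (\sum_(g | incr g) W g) => L.
set P := fun j : nat => \sum_(1 <= n < N.+1) (1 - r%:R + j%:R) ^+ omega n : R.
have hS : \sum_(1 <= n < N.+1)
      (\sum_(0 <= j < r.+1) cc j * (1 - (r - j)%:Z) ^+ omega n *+ 'C(r, j))%:~R =
    \sum_(0 <= j < r.+1) (cc j)%:~R * 'C(r, j)%:R * P j.
  rewrite (eq_bigr (fun n => \sum_(0 <= j < r.+1)
      (cc j)%:~R * 'C(r, j)%:R * (1 - r%:R + j%:R) ^+ omega n)); last first.
    move=> n _; rewrite rmorph_sum; apply: eq_big_nat => j /andP [_ jr].
    rewrite rmorphMn rmorphM rmorphXn rmorphB rmorph1 /= natz_intr natrB //.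
    have -> : 1 - (r%:R - j%:R) = 1 - r%:R + j%:R :> R by ring.
    by rewrite -mulr_natr mulrAC.
  rewrite exchange_big_nat; apply: eq_bigr => j _.
  by rewrite /P mulr_sumr.
rewrite hS; clear hS.
have P1 : P r.-1 = 1.
  rewrite /P -subn1 natrB ?(leq_trans _ r2) //.
  have -> : 1 - r%:R + (r%:R - 1%:R) = 0 :> R by ring.
  rewrite (eq_big_nat _ _ (F2 := fun n => ((n == 1)%N)%:R)); last first.
    by move=> n /andP [n1 _]; rewrite expr0n omega_eq0.
  rewrite big_ltn // eqxx big1_seq ?addr0 // => n /andP [_]; rewrite mem_index_iota.
  by case/andP => n2 _; rewrite (gtn_eqF n2).
have Pr : P r = N%:R.
  rewrite /P (eq_bigr (fun _ => 1)); last by move=> n _; rewrite subrK expr1n.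
  by rewrite sumr_const_nat subn1.
rewrite sum_last // sum_last; last by rewrite /= (leq_trans _ r2).
rewrite (@sum_from2 R (fun j => (cc j)%:~R * 'C(r, j)%:R * P j)) ?mul0r //.
rewrite /=.
have hs2 : \sum_(2 <= j < r.-1)
     (-1) ^+ j * j.-1%:R * 'C(r, j)%:R *
     \sum_(1 <= n < N.+1) (1 - r%:R + j%:R) ^+ omega n =
    \sum_(2 <= j < r.-1) (cc j)%:~R * 'C(r, j)%:R * P j.
  apply: eq_big_nat => j /andP [j2 _]; case: j j2 => [|j] // _.
  by rewrite cc_pred.
rewrite hs2 P1 Pr natz_intr; clear hs2 P1 Pr.
move: (\sum_(2 <= j < r.-1) (cc j)%:~R * 'C(r, j)%:R * P j) => s2.
clear P W t0 termE.
move: (N%:R : R) => M; clear flx N0 N term.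
case: r r2 L s2 => [|[|k]] // _ L s2 /=.
rewrite cc_pred cc_top binSn binn ?subSS ?subn0 !factS !natrM.
have f0 : (k`!%:R : R) != 0 by rewrite pnatr_eq0 -lt0n fact_gt0.
have k1 : (k.+1%:R : R) != 0 by rewrite pnatr_eq0.
have k2 : (k.+2%:R : R) != 0 by rewrite pnatr_eq0.
rewrite -[L *+ _]mulr_natr !natrM.
move: k1 k2; rewrite -!natr1 => k1 k2.
rewrite !exprS; move: ((-1) ^+ k : R) (k%:R : R) (k`!%:R : R) f0 k1 k2 => e a b f0 k1 k2. field.
by rewrite f0 k1 k2.
Qed.
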